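(* Let $m\ge 3$ and let $G=\mathrm{Sp}_{2m}(2)$ act in one of its two $2$-transitive actions (on the set of quadratic forms of $+$ type, respectively of $-$ type, on $\mathbb{F}_2^{2m}$ whose associated bilinear form is the defining symplectic form; degrees $2^{2m-1}+2^{m-1}$ and $2^{2m-1}-2^{m-1}$). Then for any two distinct points $\omega,\omega'$, the setwise stabilizer of $\{\omega,\omega'\}$ splits as a direct product $G(\{\omega,\omega'\}) = G(\omega,\omega')\times\langle s\rangle$, where $s$ is an involution swapping $\omega$ and $\omega'$. Consequently, there is no proper extension of this action to a $2$-by-block-transitive action of $G$.
   Context: A proper extension to a $2$-by-block-transitive action is a $G$-set $\Omega$ with a $G$-equivariant surjection onto the given $G$-set whose fibres (blocks) have size at least $2$, such that $G$ is transitive on ordered pairs of points of $\Omega$ in distinct blocks. *)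

(* Defs.v *)
From HB Require Import structures.
From mathcomp Require Import all_boot all_order all_algebra all_fingroup.
Set Implicit Arguments. Unset Strict Implicit. Unset Printing Implicit Defensive.
Import GRing.Theory.

Definition V (m : nat) : finType := 'rV['F_2]_(m + m).

Definition sympB (m : nat) (x y : V m) : 'F_2 :=
  (\sum_(i < m) (x 0 (lshift m i) * y 0 (rshift m i)
                + x 0 (rshift m i) * y 0 (lshift m i)))%R.

Definition Sp_set (m : nat) : {set {perm V m}} :=
  [set g : {perm V m} |
     [forall x : V m, forall y : V m, g (x + y)%R == (g x + g y)%R]
  && [forall a : 'F_2, forall x : V m, g (a *: x)%R == (a *: g x)%R]
  && [forall x : V m, forall y : V m, sympB (g x) (g y) == sympB x y]].

Lemma Sp_group_set m : group_set (Sp_set m).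
Proof.
apply/andP; split.
  rewrite inE; apply/andP; split; first (apply/andP; split).
  - by apply/forallP=> x; apply/forallP=> y; rewrite !perm1.
  - by apply/forallP=> a; apply/forallP=> x; rewrite !perm1.
  - by apply/forallP=> x; apply/forallP=> y; rewrite !perm1.
apply/subsetP=> gh /mulsgP[g h]; rewrite !inE.
move=> /andP[/andP[/forallP Ag /forallP Sg] /forallP Bg].
move=> /andP[/andP[/forallP Ah /forallP Sh] /forallP Bh] ->.
apply/andP; split; first (apply/andP; split).
- apply/forallP=> x; apply/forallP=> y; rewrite !permM.
  by rewrite (eqP (forallP (Ag x) y)) (eqP (forallP (Ah (g x)) (g y))).
- apply/forallP=> a; apply/forallP=> x; rewrite !permM.
  by rewrite (eqP (forallP (Sg a) x)) (eqP (forallP (Sh a) (g x))).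
- apply/forallP=> x; apply/forallP=> y; rewrite !permM.
  by rewrite (eqP (forallP (Bh (g x)) (g y))) (eqP (forallP (Bg x) y)).
Qed.

Canonical Sp (m : nat) : {group {perm V m}} := Group (Sp_group_set m).

Definition is_quad_for_B (m : nat) (Q : {ffun V m -> 'F_2}) : bool :=
  [forall a : 'F_2, forall x : V m, Q (a *: x)%R == (a ^+ 2 * Q x)%R]
  && [forall x : V m, forall y : V m, Q (x + y)%R == (Q x + Q y + sympB x y)%R].

(* Q has a totally singular subspace of dimension k (the row space of a
   k x 2m matrix of full row rank on which Q vanishes). *)
Definition has_tsing (m k : nat) (Q : {ffun V m -> 'F_2}) : bool :=
  [exists W : 'M['F_2]_(k, m + m),
     row_free W && [forall v : 'rV['F_2]_k, Q (v *m W)%R == 0%R]].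

(* Witt index m: + type; Witt index m-1: - type. *)
Definition plus_type (m : nat) (Q : {ffun V m -> 'F_2}) : bool := has_tsing m Q.
Definition minus_type (m : nat) (Q : {ffun V m -> 'F_2}) : bool :=
  has_tsing m.-1 Q && ~~ has_tsing m Q.

Definition Omega (m : nat) (eps : bool) : {set {ffun V m -> 'F_2}} :=
  [set Q | is_quad_for_B Q && (if eps then plus_type Q else minus_type Q)].

Definition formact (m : nat) (Q : {ffun V m -> 'F_2}) (g : {perm V m}) :
  {ffun V m -> 'F_2} := [ffun x => Q ((g^-1)%g x)].

Definition pstab (m : nat) (w w' : {ffun V m -> 'F_2}) : {set {perm V m}} :=
  [set g in Sp m | (formact w g == w) && (formact w' g == w')].
Definition sstab (m : nat) (w w' : {ffun V m -> 'F_2}) : {set {perm V m}} :=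
  [set g in Sp m | [set formact w g; formact w' g] == [set w; w']].

(* A proper extension of the action of Sp m on Omega m eps to a
   2-by-block-transitive action: a G-set T with a G-equivariant surjection
   pi onto Omega whose fibres have size >= 2, with G transitive on ordered
   pairs of points of T lying in distinct blocks. *)
Definition proper_2bbt_extension (m : nat) (eps : bool) (T : finType)
  (to : action (Sp m) T) (pi : T -> {ffun V m -> 'F_2}) : Prop :=
  [/\ forall x, pi x \in Omega m eps,
      forall w, w \in Omega m eps -> exists x, pi x = w,
      forall x g, g \in Sp m -> pi (to x g) = formact (pi x) g,
      forall w, w \in Omega m eps -> 2 <= #|[set x | pi x == w]|
    & forall x y x' y', pi x != pi y -> pi x' != pi y' ->
        exists2 g, g \in Sp m & to x g = x' /\ to y g = y'].

(* Main.v *)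
Require Import Defs.
From mathcomp Require Import all_boot all_order all_algebra all_fingroup.
From mathcomp Require Import zify ring.
Set Implicit Arguments. Unset Strict Implicit. Unset Printing Implicit Defensive.
Import GRing.Theory.
Open Scope ring_scope.



Lemma F2_cases (a : 'F_2) : a = 0 \/ a = 1.
Proof. case: a => [[|[|n]] Hn]; [left|right|by []]; exact/val_inj. Qed.
Lemma F2_addd (a : 'F_2) : a + a = 0.
Proof. by case: (F2_cases a) => ->; apply/eqP. Qed.
Lemma F2_mulD (a : 'F_2) : a * a = a.
Proof. by case: (F2_cases a) => ->; apply/eqP. Qed.
Lemma F2_opp (a : 'F_2) : - a = a.
Proof. by case: (F2_cases a) => ->; apply/eqP. Qed.
Lemma F2_neq0 (a : 'F_2) : a != 0 -> a = 1.
Proof. by case: (F2_cases a) => ->. Qed.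


Lemma B_addl m (x y z : V m) : sympB (x + y) z = sympB x z + sympB y z.
Proof.
rewrite /sympB -big_split /=; apply: eq_bigr => i _; rewrite !mxE.
by rewrite !mulrDl !addrA; congr (_ + _); rewrite -!addrA; congr (_ + _); rewrite addrC.
Qed.

Lemma B_sym m (x y : V m) : sympB x y = sympB y x.
Proof.
by rewrite /sympB; apply: eq_bigr => i _; rewrite addrC mulrC [X in _ + X]mulrC.
Qed.

Lemma B_addr m (x y z : V m) : sympB z (x + y) = sympB z x + sympB z y.
Proof. by rewrite !(B_sym z) B_addl. Qed.

Lemma B_scalel m a (x y : V m) : sympB (a *: x) y = a * sympB x y.
Proof.
rewrite /sympB mulr_sumr; apply: eq_bigr => i _; rewrite !mxE.
by rewrite mulrDr !mulrA.
Qed.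

Lemma B_scaler m a (x y : V m) : sympB y (a *: x) = a * sympB y x.
Proof. by rewrite !(B_sym y) B_scalel. Qed.

Lemma B_alt m (x : V m) : sympB x x = 0.
Proof.
rewrite /sympB big1 // => i _; by rewrite [X in _ + X]mulrC F2_addd.
Qed.

Lemma B_0l m (y : V m) : sympB 0 y = 0.
Proof. by rewrite -(scale0r 0) B_scalel mul0r. Qed.
Lemma B_0r m (y : V m) : sympB y 0 = 0.
Proof. by rewrite B_sym B_0l. Qed.

Lemma B_er m (u : V m) (i : 'I_m) : sympB u 'e_(rshift m i) = u 0 (lshift m i).
Proof.
rewrite /sympB (bigD1 i) //= big1 => [|j ji]; rewrite !mxE /= ?eq_rshift ?eq_lrshift.
  by rewrite eqxx mulr1 mulr0 !addr0.
by rewrite (negbTE ji) mulr0 mulr0 addr0.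
Qed.

Lemma B_el m (u : V m) (i : 'I_m) : sympB u 'e_(lshift m i) = u 0 (rshift m i).
Proof.
rewrite /sympB (bigD1 i) //= big1 => [|j ji]; rewrite !mxE /= ?eq_lshift ?eq_rlshift.
  by rewrite eqxx mulr1 mulr0 !add0r addr0.
by rewrite (negbTE ji) mulr0 mulr0 addr0.
Qed.

Lemma B_nondeg m (u : V m) : (forall y, sympB u y = 0) -> u = 0.
Proof.
move=> H; apply/rowP => j; rewrite mxE.
case: (splitP j) => k jk.
  have -> : j = lshift m k by apply/val_inj.
  by rewrite -B_er H.
have -> : j = rshift m k by apply/val_inj.
by rewrite -B_el H.
Qed.

Lemma V_addd m (x : V m) : x + x = 0.
Proof. by apply/rowP => j; rewrite !mxE F2_addd. Qed.
Lemma V_addK m (x y : V m) : x + y + y = x.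
Proof. by rewrite -addrA V_addd addr0. Qed.



Lemma quadP m (Q : {ffun V m -> 'F_2}) : is_quad_for_B Q ->
  (forall a x, Q (a *: x) = a ^+ 2 * Q x) /\
  (forall x y, Q (x + y) = Q x + Q y + sympB x y).
Proof.
case/andP => /forallP H1 /forallP H2; split.
  by move=> a x; apply/eqP; exact: (forallP (H1 a) x).
by move=> x y; apply/eqP; exact: (forallP (H2 x) y).
Qed.

Lemma quad0 m (Q : {ffun V m -> 'F_2}) : is_quad_for_B Q -> Q 0 = 0.
Proof. by case/quadP => H _; rewrite -(scale0r 0) H expr2 !mul0r. Qed.

Lemma riesz m (f : V m -> 'F_2) : (forall x y, f (x + y) = f x + f y) ->
  exists v, forall x, f x = sympB v x.
Proof.
move=> fD.
have f0 : f 0 = 0 by apply: (addrI (f 0)); rewrite -fD !addr0.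
have fZ : forall a x, f (a *: x) = a * f x.
  by move=> a x; case: (F2_cases a) => ->; rewrite ?scale0r ?f0 ?mul0r ?scale1r ?mul1r.
exists (\sum_(i < m) (f 'e_(rshift m i) *: 'e_(lshift m i) + f 'e_(lshift m i) *: 'e_(rshift m i))).
move=> x; rewrite B_sym.
rewrite (big_morph (sympB x) (fun a b => B_addr a b x) (B_0r x)).
rewrite {1}(row_sum_delta x) (big_morph f fD f0) big_split_ord /= -big_split /=.
apply: eq_bigr => i _.
by rewrite B_addr !B_scaler B_el B_er !fZ addrC !(mulrC (x 0 _)).
Qed.

Lemma quad_diff m (Q Q' : {ffun V m -> 'F_2}) : is_quad_for_B Q -> is_quad_for_B Q' ->
  exists v, forall x, Q' x = Q x + sympB v x.
Proof.
move=> /quadP[_ HQ] /quadP[_ HQ'].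
have [v Hv] : exists v, forall x, Q x + Q' x = sympB v x.
  apply: riesz => x y; rewrite HQ HQ'.
  rewrite (_ : _ + _ = Q x + Q' x + (Q y + Q' y) + (sympB x y + sympB x y)); last by ring.
  by rewrite F2_addd addr0.
exists v => x; rewrite -Hv addrA F2_addd add0r //.
Qed.

Definition sg (a : 'F_2) : int := if a == 0 then 1 else -1.
Lemma sgD a b : sg (a + b) = sg a * sg b.
Proof. by case: (F2_cases a) => ->; case: (F2_cases b) => ->. Qed.
Lemma sg0 : sg 0 = 1. Proof. by []. Qed.
Lemma sg1 : sg 1 = -1. Proof. by []. Qed.

Definition Ssum m (Q : V m -> 'F_2) : int := \sum_(x : V m) sg (Q x).

Lemma charsum m (A : {set V m}) (chi : V m -> 'F_2) :
  (forall a b, a \in A -> b \in A -> a + b \in A) ->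
  (forall a b, a \in A -> b \in A -> chi (a + b) = chi a + chi b) ->
  forall a0, a0 \in A -> chi a0 != 0 -> \sum_(a in A) sg (chi a) = 0.
Proof.
move=> Acl chiD a0 a0A /F2_neq0 c1.
set s := \sum_(a in A) _.
have : s = - s.
  rewrite {1}/s (reindex_inj (addIr a0)) /=.
  have HA : forall x, (x + a0 \in A) = (x \in A).
    move=> x; apply/idP/idP => [H|]; last by move=> H; apply: Acl.
    by rewrite -(V_addK x a0); apply: Acl.
  rewrite (eq_bigl (fun x => x \in A)); last by move=> x; rewrite /= HA.
  rewrite /s -sumrN; apply: eq_bigr => x xA; by rewrite chiD // c1 sgD sg1 mulrN1.
by move=> h; lia.
Qed.



Lemma S_shift m (Q : {ffun V m -> 'F_2}) (Q' : V m -> 'F_2) v :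
  is_quad_for_B Q -> (forall x, Q' x = Q x + sympB v x) ->
  Ssum Q' = sg (Q v) * Ssum Q.
Proof.
move=> /quadP[_ HQ] HQ'.
rewrite /Ssum (reindex_inj (addIr v)) /= mulr_sumr; apply: eq_bigr => x _.
rewrite HQ' HQ B_addr B_alt addr0 (B_sym v x).
rewrite (_ : Q x + Q v + sympB x v + sympB x v = Q x + Q v + (sympB x v + sympB x v)); last by ring.
rewrite F2_addd addr0.
by rewrite sgD mulrC.
Qed.

Definition perp m (A : {set V m}) := [set x : V m | [forall a in A, sympB x a == 0]].

Lemma inner_sum m (A : {set V m}) x :
  (forall a b, a \in A -> b \in A -> a + b \in A) ->
  \sum_(a in A) sg (sympB x a) = if x \in perp A then #|A|%:Z else 0.
Proof.
move=> Acl; case: ifP => xP.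
  rewrite (eq_bigr (fun _ => 1)) ?sumr_const -?natz //.
  by move=> a aA; move: xP; rewrite inE => /forall_inP /(_ a aA) /eqP ->.
move/negbT: xP; rewrite inE negb_forall => /existsP[a0]; rewrite negb_imply => /andP[a0A nz].
apply: (charsum Acl _ a0A nz) => a b _ _; exact: B_addr.
Qed.

Lemma cardV m : #|V m| = (2 ^ (m + m))%N.
Proof. by rewrite /V card_mx card_Fp // mul1n. Qed.

Lemma outer_sum m (a : V m) :
  \sum_(x : V m) sg (sympB x a) = if a == 0 then (2 ^ (m + m))%N%:Z else 0.
Proof.
case: eqP => [->|/eqP an0].
  rewrite (eq_bigr (fun _ => 1)) ?sumr_const -?natz; last by move=> x _; rewrite B_0r.
  by rewrite cardE -cardT cardV.
have [y hy] : exists y, sympB a y != 0.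
  apply/existsP; apply: contraR an0; rewrite negb_exists => /forallP H.
  by apply/eqP/B_nondeg => y; apply/eqP; move: (H y); rewrite negbK.
have -> : \sum_(x : V m) sg (sympB x a) = \sum_(x in [set: V m]) sg (sympB x a).
  by apply: eq_bigl => x; rewrite inE.
apply: (@charsum m setT (fun x => sympB x a) _ _ y).
- by move=> *; rewrite inE.
- by move=> *; exact: B_addl.
- by rewrite inE.
- by rewrite B_sym.
Qed.

Lemma count_perp m (A : {set V m}) : 0 \in A ->
  (forall a b, a \in A -> b \in A -> a + b \in A) ->
  (#|A| * #|perp A| = 2 ^ (m + m))%N.
Proof.
move=> A0 Acl.
have E : \sum_(x : V m) \sum_(a in A) sg (sympB x a) = (#|A| * #|perp A|)%N%:Z.
  under eq_bigr do rewrite inner_sum //.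
  rewrite -big_mkcond /= sumr_const -mulr_natr -[Posz #|A|]natz -natrM natz //.
move: E; rewrite exchange_big /=.
under eq_bigr do rewrite outer_sum.
rewrite (bigD1 0) //= eqxx big1 ?addr0 => [|a /andP[_ /negbTE ->]//].
by move=> h; lia.
Qed.

Lemma avg_S m (A : {set V m}) (Q : {ffun V m -> 'F_2}) : 
  (forall a b, a \in A -> b \in A -> a + b \in A) ->
  is_quad_for_B Q -> (forall a, a \in A -> Q a = 0) ->
  #|A|%:Z * Ssum Q = #|A|%:Z * \sum_(x in perp A) sg (Q x).
Proof.
move=> Acl qQ QA.
have [_ HQ] := quadP qQ.
have E : forall a, a \in A -> Ssum Q = \sum_(x : V m) sg (Q x) * sg (sympB x a).
  move=> a aA; rewrite /Ssum (reindex_inj (addIr a)); apply: eq_bigr => x _.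
  by rewrite HQ (QA a aA) addr0 sgD.
rewrite -natz mulr_natl -sumr_const.
under eq_bigr => a aA do rewrite (E a aA).
rewrite exchange_big /=.
under eq_bigr do rewrite -mulr_sumr inner_sum //.
rewrite natz mulr_sumr [RHS]big_mkcond /=; apply: eq_bigr => x _.
by case: ifP => _; rewrite ?mulr0 // mulrC.
Qed.



Definition spanW m k (W : 'M['F_2]_(k, m + m)) : {set V m} := [set u *m W | u : 'rV_k].

Lemma spanW0 m k (W : 'M['F_2]_(k, m + m)) : 0 \in spanW W.
Proof. by apply/imsetP; exists 0; rewrite ?inE ?mul0mx. Qed.

Lemma spanW_cl m k (W : 'M['F_2]_(k, m + m)) a b :
  a \in spanW W -> b \in spanW W -> a + b \in spanW W.
Proof.
by case/imsetP=> u _ -> /imsetP[u' _ ->]; apply/imsetP; exists (u + u'); rewrite ?inE ?mulmxDl.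
Qed.

Lemma spanW_card m k (W : 'M['F_2]_(k, m + m)) : row_free W -> #|spanW W| = (2 ^ k)%N.
Proof.
move=> rf; rewrite card_imset; last exact: row_free_inj.
by rewrite card_mx card_Fp // mul1n.
Qed.

Lemma tsing_perp m k (W : 'M['F_2]_(k, m + m)) (Q : {ffun V m -> 'F_2}) :
  is_quad_for_B Q -> (forall v, Q (v *m W) = 0) -> spanW W \subset perp (spanW W).
Proof.
move=> /quadP[_ HQ] QW; apply/subsetP => x xA; rewrite inE; apply/forall_inP => a aA.
have := HQ x a.
case/imsetP: xA => u _ ->; case/imsetP: aA => u' _ ->.
by rewrite -mulmxDl !QW !add0r => <-.
Qed.

Lemma tsingP m k (Q : {ffun V m -> 'F_2}) : has_tsing k Q ->
  exists2 W : 'M['F_2]_(k, m + m), row_free W & forall v, Q (v *m W) = 0.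
Proof.
by case/existsP => W /andP[rf /forallP H]; exists W => // v; apply/eqP.
Qed.

Lemma plus_S m (Q : {ffun V m -> 'F_2}) : is_quad_for_B Q -> has_tsing m Q ->
  Ssum Q = (2 ^ m)%N%:Z.
Proof.
move=> qQ /tsingP[W rf QW].
have cA := spanW_card rf.
have sub := tsing_perp qQ QW.
have cp := count_perp (spanW0 W) (@spanW_cl m m W).
have cP : #|perp (spanW W)| = (2 ^ m)%N.
  apply/eqP; rewrite -(eqn_pmul2l (expn_gt0 2 m)) -{1}cA cp expnD //.
have eA : spanW W = perp (spanW W) by apply/eqP; rewrite eqEcard sub cA cP leqnn.
have QA : forall a, a \in spanW W -> Q a = 0 by move=> a /imsetP[u _ ->].
have := avg_S (@spanW_cl m m W) qQ QA.
rewrite -eA (eq_bigr (fun _ => 1)) => [|x xA]; last by rewrite QA.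
rewrite sumr_const cA => h.
have nz : Posz (2 ^ m)%N != 0 by apply/eqP => h'; move: (expn_gt0 2 m); lia.
by rewrite (mulfI nz h) natz.
Qed.

Lemma rowS_split n (v : 'rV['F_2]_(1 + n)) : v = row_mx (v 0 ord0)%:M (rsubmx v).
Proof.
rewrite -{1}(hsubmxK v) [lsubmx v]mx11_scalar; congr (row_mx (_ %:M) _).
by rewrite mxE; congr (v _ _); apply/val_inj.
Qed.

Lemma minus_S n (Q : {ffun V n.+1 -> 'F_2}) : is_quad_for_B Q -> has_tsing n Q ->
  ~~ has_tsing n.+1 Q -> Ssum Q = - (2 ^ n.+1)%N%:Z.
Proof.
move=> qQ /tsingP[W rf QW] nt.
have [HZ HQ] := quadP qQ.
have cA := spanW_card rf.
have sub := tsing_perp qQ QW.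
have cp := count_perp (spanW0 W) (@spanW_cl _ _ W).
have inW : forall u, u *m W \in spanW W by move=> u; apply/imsetP; exists u.
have QA : forall a, a \in spanW W -> Q a = 0 by move=> a /imsetP[u _ ->].
have key : forall x, x \in perp (spanW W) -> x \notin spanW W -> Q x = 1.
  move=> x xP xA; apply: F2_neq0; apply/negP => /eqP Qx0; move/negP: nt; apply.
  have xP' := xP; rewrite inE in xP'; move/forall_inP: xP' => xP'.
  apply/existsP; exists (col_mx x W : 'M_(1 + n, _)); apply/andP; split.
  - rewrite -kermx_eq0; apply/rowV0P => v /sub_kermxP.
    rewrite (rowS_split v) (mul_row_col (n1:=1) (n2:=n)) mul_scalar_mx.
    case: (F2_cases (v 0 ord0)) => ->.
    + rewrite scale0r add0r => rW0.
      have -> : rsubmx (v : 'rV_(1 + n)) = 0 by apply: (row_free_inj rf); rewrite rW0 mul0mx.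
      have -> : (0 : 'F_2)%:M = 0 :> 'M_1 by apply/matrixP => i j; rewrite !mxE mul0rn.
      by rewrite row_mx0.
    + rewrite scale1r => /eqP; rewrite addr_eq0 => /eqP xE.
      by case/negP: xA; rewrite xE -mulNmx inW.
  - apply/forallP => u; apply/eqP.
    rewrite (rowS_split u) (mul_row_col (n1:=1) (n2:=n)) mul_scalar_mx.
    rewrite HQ HZ Qx0 mulr0 add0r QW add0r B_scalel (eqP (xP' _ (inW _))).
    by rewrite mulr0.
have cP : #|perp (spanW W)| = (2 ^ n * 4)%N.
  apply/eqP; rewrite -(eqn_pmul2l (expn_gt0 2 n)) -{1}cA cp.
  by rewrite addSn addnS !expnS expnD; apply/eqP; ring.
have := avg_S (@spanW_cl _ _ W) qQ QA.
rewrite (big_setID (spanW W)) /= (setIidPr sub).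
rewrite (eq_bigr (fun _ => 1)) => [|x xA]; last by rewrite QA.
rewrite [X in _ + X](eq_bigr (fun _ => -1)) => [|x]; last first.
  by rewrite inE => /andP[xA xP]; rewrite key.
rewrite !sumr_const cardsD (setIidPr sub) cA cP => h.
have nz : Posz (2 ^ n)%N != 0 by apply/eqP => h'; move: (expn_gt0 2 n); lia.
rewrite (mulfI nz h) mulNrn !natz expnS.
have := expn_gt0 2 n; lia.
Qed.



Lemma SpP m (g : {perm V m}) : g \in Sp m ->
  [/\ forall x y, g (x + y) = g x + g y, forall a x, g (a *: x) = a *: g x
    & forall x y, sympB (g x) (g y) = sympB x y].
Proof.
rewrite inE => /andP[/andP[/forallP H1 /forallP H2] /forallP H3]; split.
- by move=> x y; apply/eqP; exact: (forallP (H1 x) y).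
- by move=> a x; apply/eqP; exact: (forallP (H2 a) x).
- by move=> x y; apply/eqP; exact: (forallP (H3 x) y).
Qed.

Lemma formactE m (Q : {ffun V m -> 'F_2}) g x : formact Q g x = Q ((g^-1)%g x).
Proof. by rewrite ffunE. Qed.

Lemma formact_mul m (Q : {ffun V m -> 'F_2}) g h :
  formact (formact Q g) h = formact Q (g * h)%g.
Proof. by apply/ffunP => x; rewrite !ffunE invMg permM. Qed.

Lemma formact1 m (Q : {ffun V m -> 'F_2}) : formact Q 1%g = Q.
Proof. by apply/ffunP => x; rewrite !ffunE invg1 perm1. Qed.

Definition tv m (v : V m) (x : V m) : V m := x + sympB x v *: v.

Lemma tvK m (v : V m) : involutive (tv v).
Proof.
move=> x; rewrite /tv B_addl B_scalel B_alt mulr0 addr0 -addrA -scalerDl.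
by rewrite F2_addd scale0r addr0.
Qed.

Definition tperm_v m (v : V m) : {perm V m} := perm (inv_inj (@tvK m v)).

Lemma tpvE m (v : V m) x : tperm_v v x = x + sympB x v *: v.
Proof. by rewrite permE. Qed.

Lemma tpv_Sp m (v : V m) : tperm_v v \in Sp m.
Proof.
rewrite inE; apply/andP; split; first (apply/andP; split).
- apply/forallP => x; apply/forallP => y; rewrite !tpvE B_addl scalerDl.
  by apply/eqP; rewrite -!addrA; congr (_ + _); rewrite addrCA.
- apply/forallP => a; apply/forallP => x; rewrite !tpvE B_scalel scalerDr scalerA //.
- apply/forallP => x; apply/forallP => y; rewrite !tpvE.
  rewrite !B_addl !B_addr !B_scalel !B_scaler B_alt (B_sym v y).
  apply/eqP; rewrite mulr0 mulr0 addr0 (mulrC (sympB y v)) -addrA F2_addd.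
  by rewrite addr0.
Qed.

Lemma tpv_sq m (v : V m) : (tperm_v v * tperm_v v)%g = 1%g.
Proof. by apply/permP => x; rewrite permM perm1 !tpvE -/(tv v x) -/(tv v (tv v x)) tvK. Qed.

Lemma tpvV m (v : V m) : ((tperm_v v)^-1)%g = tperm_v v.
Proof. by rewrite -[LHS]mulg1 -(tpv_sq v) mulKg. Qed.

Lemma exists_B1 m (v : V m) : v != 0 -> exists y, sympB y v = 1.
Proof.
move=> vn0.
have [y hy] : exists y, sympB v y != 0.
  apply/existsP; apply: contraR vn0; rewrite negb_exists => /forallP H.
  by apply/eqP/B_nondeg => y; apply/eqP; move: (H y); rewrite negbK.
by exists y; rewrite B_sym; apply: F2_neq0.
Qed.

Lemma formact_inj m (Q Q' : {ffun V m -> 'F_2}) g : formact Q g = formact Q' g -> Q = Q'.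
Proof.
move=> E; by rewrite -(formact1 Q) -(mulgV g) -formact_mul E formact_mul mulgV formact1.
Qed.

Lemma pstabP m (w w' : {ffun V m -> 'F_2}) g :
  (g \in pstab w w') = [&& g \in Sp m, formact w g == w & formact w' g == w'].
Proof. by rewrite /pstab in_set. Qed.

Lemma sstabP m (w w' : {ffun V m -> 'F_2}) g :
  (g \in sstab w w') = (g \in Sp m) && ([set formact w g; formact w' g] == [set w; w']).
Proof. by rewrite /sstab in_set. Qed.

Lemma pstab_group_set m (w w' : {ffun V m -> 'F_2}) : group_set (pstab w w').
Proof.
apply/group_setP; split.
  by rewrite pstabP group1 !formact1 !eqxx.
move=> g h; rewrite !pstabP => /andP[gS /andP[/eqP g1 /eqP g2]] /andP[hS /andP[/eqP h1 /eqP h2]].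
by rewrite groupM // -!formact_mul g1 g2 h1 h2 !eqxx.
Qed.

Lemma cyc_inv m (s : {perm V m}) c : (s * s)%g = 1%g -> c \in <[s]>%g -> c = 1%g \/ c = s.
Proof.
move=> ss /cycleP[i ->].
have s2 : (s ^+ 2)%g = 1%g by rewrite expgS expg1.
rewrite -(expg_mod _ s2).
have : (i %% 2 < 2)%N by rewrite ltn_pmod.
by case: (i %% 2)%N => [|[|//]] _; [left; rewrite expg0 | right; rewrite expg1].
Qed.

Lemma core m (w w' : {ffun V m -> 'F_2}) v :
  is_quad_for_B w -> v != 0 -> w v = 0 -> (forall x, w' x = w x + sympB v x) ->
  [/\ tperm_v v != 1%g, (tperm_v v ^+ 2)%g = 1%g, formact w (tperm_v v) = w',
      formact w' (tperm_v v) = w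
    & (forall g, g \in pstab w w' -> commute (tperm_v v) g) /\
      (pstab w w' \x <[tperm_v v]>)%g = sstab w w'].
Proof.
move=> qw vn0 wv0 Hw'.
have [HZ HQ] := quadP qw.
set s := tperm_v v.
have sSp : s \in Sp m by apply: tpv_Sp.
have ss : (s * s)%g = 1%g by apply: tpv_sq.
have ww' : w != w'.
  apply/eqP => E; case/negP: vn0; apply/eqP/B_nondeg => y.
  by move: (Hw' y); rewrite -E -{1}[w y]addr0 => /addrI <-.
have fs : formact w s = w'.
  apply/ffunP => x; rewrite formactE tpvV tpvE HQ HZ wv0 mulr0 addr0 B_scaler.
  by rewrite F2_mulD Hw' B_sym.
have fs' : formact w' s = w by rewrite -fs formact_mul ss formact1.
have comm : forall g, g \in pstab w w' -> commute s g.
  move=> g; rewrite pstabP => /andP[gS /andP[/eqP g1 /eqP g2]].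
  have [gD gZ gB] := SpP gS.
  have Bv : forall y, sympB v y = w y + w' y.
    by move=> y; rewrite Hw' addrA F2_addd add0r.
  have gv : g v = v.
    have E : forall y, sympB (g v + v) y = 0.
      move=> y; rewrite B_addl -{1}(permKV g y) gB !Bv.
      have g1' : forall y, w ((g^-1)%g y) = w y by move=> z; rewrite -formactE g1.
      have g2' : forall y, w' ((g^-1)%g y) = w' y by move=> z; rewrite -formactE g2.
      by rewrite g1' g2' F2_addd.
    by rewrite -(V_addK (g v) v) (B_nondeg E) add0r.
  apply/permP => x; rewrite !permM !tpvE gD gZ gv.
  by rewrite -{3}gv gB.
have pgs := pstab_group_set w w'.
have cent : <[s]>%g \subset 'C(Group pgs)%g.
  by rewrite cycle_subG; apply/centP => g gG; apply: comm.
have tI : (Group pgs :&: <[s]>)%g = 1%g.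
  apply/eqP; rewrite eqEsubset sub1G andbT; apply/subsetP => c; rewrite inE => /andP[cG cS].
  move: cG; case: (cyc_inv ss cS) => ->; first by rewrite group1.
  rewrite /= pstabP fs => /and3P[_ /eqP E _].
  by move: ww'; rewrite E eqxx.
split => //; last split => //.
- apply/eqP => s1; case: (exists_B1 vn0) => y hy.
  move: (congr1 (fun p : {perm V m} => p y) s1); rewrite perm1 tpvE hy scale1r.
  by move/eqP; rewrite -subr_eq0 addrAC subrr add0r (negbTE vn0).
rewrite (dprodE (G:=Group pgs) cent tI) /=.
apply/setP => g; apply/idP/idP.
  case/mulsgP => h c hG cS ->.
  move: hG; rewrite pstabP => /andP[hS /andP[/eqP h1 /eqP h2]].
  rewrite sstabP -!formact_mul h1 h2.
  case: (cyc_inv ss cS) => ->; rewrite ?mulg1 ?hS ?formact1 ?eqxx //.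
  by rewrite groupM // fs fs' setUC eqxx.
rewrite sstabP => /andP[gS /eqP E].
have a1 : formact w g \in [set w; w'] by rewrite -E set21.
have a2 : formact w' g \in [set w; w'] by rewrite -E set22.
move: a1 a2; rewrite !inE => /orP[/eqP e1|/eqP e1] /orP[/eqP e2|/eqP e2].
- by case/eqP: ww'; apply: (@formact_inj _ _ _ g); rewrite e1 e2.
- apply/mulsgP; exists g 1%g; rewrite ?mulg1 ?group1 //.
  by rewrite /= pstabP gS e1 e2 !eqxx.
- apply/mulsgP; exists (g * s)%g s; rewrite ?cycle_id -?mulgA ?ss ?mulg1 //.
  by rewrite /= pstabP groupM // -!formact_mul e1 e2 fs fs' !eqxx.
- by case/eqP: ww'; apply: (@formact_inj _ _ _ g); rewrite e1 e2.
Qed.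



Lemma Omega_S m eps (w : {ffun V m -> 'F_2}) : (0 < m)%N -> w \in Omega m eps ->
  Ssum w = (if eps then 1 else -1) * (2 ^ m)%N%:Z.
Proof.
case: m w => [//|n] w _; rewrite inE => /andP[qw].
case: eps => [tw|/andP[t1 nt]].
  by rewrite mul1r plus_S.
by rewrite mulN1r minus_S.
Qed.

Lemma same_type_v m eps (w w' : {ffun V m -> 'F_2}) : (0 < m)%N ->
  w \in Omega m eps -> w' \in Omega m eps -> w != w' ->
  exists v, [/\ v != 0, w v = 0 & forall x, w' x = w x + sympB v x].
Proof.
move=> m0 wO w'O ww'.
have qw : is_quad_for_B w by move: wO; rewrite inE => /andP[].
have qw' : is_quad_for_B w' by move: w'O; rewrite inE => /andP[].
have [v Hv] := quad_diff qw qw'.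
exists v; split => //.
- apply/eqP => v0; case/eqP: ww'; apply/ffunP => x; by rewrite Hv v0 B_0l addr0.
- apply/eqP; apply: contraT => /F2_neq0 wv1.
  have := S_shift qw Hv; rewrite wv1 sg1 (Omega_S m0 wO) (Omega_S m0 w'O).
  have := expn_gt0 2 m; case: (eps) => /=; lia.
Qed.



Definition Q0 m : {ffun V m -> 'F_2} :=
  [ffun x : V m => \sum_(i < m) x 0 (lshift m i) * x 0 (rshift m i)].
Definition shiftQ m (Q : {ffun V m -> 'F_2}) (v : V m) : {ffun V m -> 'F_2} :=
  [ffun x : V m => Q x + sympB v x].

Lemma Q0_quad m : is_quad_for_B (Q0 m).
Proof.
apply/andP; split; apply/forallP => a; apply/forallP => x; apply/eqP; rewrite !ffunE.
  rewrite mulr_sumr; apply: eq_bigr => i _; rewrite !mxE; ring.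
rewrite /sympB -!big_split /=; apply: eq_bigr => i _; rewrite !mxE; ring.
Qed.

Lemma shift_quad m (Q : {ffun V m -> 'F_2}) v : is_quad_for_B Q -> is_quad_for_B (shiftQ Q v).
Proof.
move=> /quadP[HZ HQ].
apply/andP; split; apply/forallP => a; apply/forallP => x; apply/eqP; rewrite !ffunE.
  by rewrite HZ B_scaler mulrDr expr2 F2_mulD.
rewrite HQ B_addr; ring.
Qed.

Lemma shift_neq m (Q : {ffun V m -> 'F_2}) v : v != 0 -> Q != shiftQ Q v.
Proof.
move=> vn0; case: (exists_B1 vn0) => y hy; apply/eqP => /ffunP /(_ y).
rewrite ffunE B_sym hy -{1}[Q y]addr0 => /addrI /eqP.
by rewrite eq_sym oner_eq0.
Qed.

Lemma e_neq0 m (j : 'I_(m + m)) : 'e_j != 0 :> V m.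
Proof.
apply/eqP => /matrixP /(_ 0 j); rewrite !mxE !eqxx /= => /eqP.
by rewrite oner_eq0.
Qed.

Lemma Q0_vanish m (z : V m) : (forall i, z 0 (rshift m i) = 0) -> Q0 m z = 0.
Proof. by move=> H; rewrite ffunE big1 // => i _; rewrite H mulr0. Qed.

Definition Wp m : 'M['F_2]_(m, m + m) := row_mx 1%:M 0.

Lemma Wp_free m : row_free (Wp m).
Proof.
rewrite -kermx_eq0; apply/rowV0P => u /sub_kermxP.
by rewrite mul_mx_row mulmx1 mulmx0 -row_mx0 => /eq_row_mx[-> _].
Qed.

Lemma Wp_r m (u : 'rV_m) i : (u *m Wp m) 0 (rshift m i) = 0.
Proof. by rewrite mul_mx_row mulmx1 mulmx0 row_mxEr mxE. Qed.

Lemma Q0_plus m : has_tsing m (Q0 m).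
Proof.
apply/existsP; exists (Wp m); apply/andP; split; first exact: Wp_free.
apply/forallP => u; apply/eqP.
by apply: Q0_vanish => i; exact: Wp_r.
Qed.

Lemma Q1_plus m (i0 : 'I_m) : has_tsing m (shiftQ (Q0 m) 'e_(lshift m i0)).
Proof.
apply/existsP; exists (Wp m); apply/andP; split; first exact: Wp_free.
apply/forallP => u; apply/eqP.
rewrite ffunE (Q0_vanish (Wp_r u)) B_sym B_el Wp_r; exact: addr0.
Qed.



Definition W2 k : 'M['F_2]_(k, k.+1 + k.+1) :=
  row_mx (row_mx (0 : 'M_(k, 1)) 1%:M : 'M_(k, 1 + k)) 0.

Lemma W2_r k (u : 'rV_k) i : (u *m W2 k) 0 (rshift k.+1 i) = 0.
Proof. by rewrite /W2 mul_mx_row mulmx0 (row_mxEr (n1:=1+k)) mxE. Qed.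

Lemma W2_l0 k (u : 'rV_k) : (u *m W2 k) 0 (lshift k.+1 ord0) = 0.
Proof.
rewrite /W2 mul_mx_row mulmx0 (row_mxEl (n1:=1+k)) (mul_mx_row (p1:=1) (p2:=k)) mulmx0 mulmx1.
have -> : (ord0 : 'I_k.+1) = lshift k (ord0 : 'I_1) by apply/val_inj.
by rewrite row_mxEl mxE.
Qed.

Lemma W2_free k : row_free (W2 k).
Proof.
rewrite -kermx_eq0; apply/rowV0P => u /sub_kermxP.
rewrite /W2 mul_mx_row mulmx0 (mul_mx_row (p1:=1) (p2:=k)) mulmx0 mulmx1.
rewrite -row_mx0 => /eq_row_mx[h _]; apply/rowP => i.
by move/rowP: h => /(_ (rshift 1 i)); rewrite (@row_mxEr _ 1 1 k) !mxE.
Qed.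

Definition u0 k : V k.+1 := 'e_(lshift k.+1 ord0) + 'e_(rshift k.+1 ord0).
Definition Q2 k := shiftQ (Q0 k.+1) (u0 k).

Lemma Q0u0 k : Q0 k.+1 (u0 k) = 1.
Proof.
rewrite ffunE (bigD1 ord0) //= big1 => [|i /negbTE i0].
  by rewrite !mxE !eqxx eq_lrshift eq_rlshift /= addr0 add0r mulr1 addr0.
by rewrite !mxE eq_lrshift eq_rlshift !eq_lshift !eq_rshift i0 /= !addr0 mulr0.
Qed.

Lemma Q2_tsing k : has_tsing k (Q2 k).
Proof.
apply/existsP; exists (W2 k); apply/andP; split; first exact: W2_free.
apply/forallP => u; apply/eqP.
rewrite ffunE (Q0_vanish (W2_r u)) /u0 B_addl !(B_sym _ (u *m W2 k)) B_el B_er W2_r W2_l0.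
by rewrite !add0r.
Qed.

Lemma Q3_tsing k (i1 : 'I_k.+1) : has_tsing k (shiftQ (Q2 k) 'e_(lshift k.+1 i1)).
Proof.
apply/existsP; exists (W2 k); apply/andP; split; first exact: W2_free.
apply/forallP => u; apply/eqP.
rewrite ffunE ffunE (Q0_vanish (W2_r u)) /u0 B_addl !(B_sym _ (u *m W2 k)) B_el B_er W2_r W2_l0.
by rewrite B_el W2_r !add0r.
Qed.

Lemma S_Q0 k : Ssum (Q0 k) = (2 ^ k)%N%:Z.
Proof. exact: plus_S (Q0_quad k) (Q0_plus k). Qed.

Lemma S_Q2 k : Ssum (Q2 k) = - (2 ^ k.+1)%N%:Z.
Proof.
rewrite (S_shift (v:=u0 k) (Q0_quad _)) ?Q0u0 ?S_Q0 ?sg1 ?mulN1r // => x.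
by rewrite ffunE.
Qed.

Lemma Q2_minus k : minus_type (Q2 k).
Proof.
rewrite /minus_type /= Q2_tsing /=; apply/negP => h.
have := plus_S (shift_quad _ (Q0_quad _)) h; rewrite -/(Q2 k) S_Q2.
have := expn_gt0 2 k.+1; lia.
Qed.

Lemma Q3_minus k (i1 : 'I_k.+1) : i1 != ord0 -> minus_type (shiftQ (Q2 k) 'e_(lshift k.+1 i1)).
Proof.
move=> i10.
rewrite /minus_type /= Q3_tsing /=; apply/negP => h.
have q2 : is_quad_for_B (Q2 k) by apply: shift_quad; apply: Q0_quad.
have := plus_S (shift_quad _ q2) h.
rewrite (S_shift (v := 'e_(lshift k.+1 i1)) q2); last by move=> x; rewrite ffunE.
have -> : Q2 k 'e_(lshift k.+1 i1) = 0.
  rewrite ffunE Q0_vanish => [|i]; last by rewrite !mxE eq_rlshift.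
  by rewrite B_el /u0 !mxE eq_rlshift eq_rshift (negbTE i10) /= !addr0.
rewrite sg0 mul1r S_Q2.
have := expn_gt0 2 k.+1; lia.
Qed.



Lemma two_points m eps : (3 <= m)%N -> exists w, exists w',
  [/\ w \in Omega m eps, w' \in Omega m eps & w != w'].
Proof.
case: m => [//|k] k2.
case: eps.
  exists (Q0 k.+1), (shiftQ (Q0 k.+1) 'e_(lshift k.+1 ord0)); split.
  - by rewrite inE Q0_quad /= /plus_type Q0_plus.
  - by rewrite inE shift_quad ?Q0_quad //= /plus_type Q1_plus.
  - exact/shift_neq/e_neq0.
have lt1 : (1 < k.+1)%N by lia.
set i1 : 'I_k.+1 := Ordinal lt1.
have q2 : is_quad_for_B (Q2 k) by apply: shift_quad; apply: Q0_quad.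
exists (Q2 k), (shiftQ (Q2 k) 'e_(lshift k.+1 i1)); split.
- by rewrite inE q2 /= Q2_minus.
- by rewrite inE shift_quad //= Q3_minus.
- exact/shift_neq/e_neq0.
Qed.

Close Scope ring_scope.
Theorem lemma3p7 (m : nat) (eps : bool) : 3 <= m ->
  (forall w w' : {ffun V m -> 'F_2},
      w \in Omega m eps -> w' \in Omega m eps -> w != w' ->
      exists2 s : {perm V m}, s \in Sp m &
        [/\ s != 1%g, (s ^+ 2)%g = 1%g, formact w s = w', formact w' s = w
          & (pstab w w' \x <[s]>)%g = sstab w w'])
  /\ (forall (T : finType) (to : action (Sp m) T) (pi : T -> {ffun V m -> 'F_2}),
        ~ proper_2bbt_extension eps to pi).
Proof.
move=> m3; have m0 : (0 < m)%N by lia.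
have qO : forall w, w \in Omega m eps -> is_quad_for_B w.
  by move=> w; rewrite inE => /andP[].
split.
  move=> w w' wO w'O ww'.
  have [v [vn0 wv0 Hv]] := same_type_v m0 wO w'O ww'.
  have [s1 s2 f1 f2 [_ dp]] := core (qO _ wO) vn0 wv0 Hv.
  by exists (tperm_v v); [exact: tpv_Sp | split].
move=> T to pi [H1 H2 H3 H4 H5].
have [w0 [w1 [w0O w1O w01]]] := two_points eps m3.
have [v [vn0 wv0 Hv]] := same_type_v m0 w0O w1O w01.
have [_ _ f1 _ [comm _]] := core (qO _ w0O) vn0 wv0 Hv.
have sS := tpv_Sp v.
set s := tperm_v v in f1 comm sS.
have [x0 px0] := H2 _ w0O.
have px0s : pi (to x0 s) = w1 by rewrite H3 // px0 f1.
have [y [py yne]] : exists y, pi y = w1 /\ y != to x0 s.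
  case: (pickP [pred y | (pi y == w1) && (y != to x0 s)]) => [y /andP[/eqP py yn] | none].
    by exists y.
  exfalso.
  have sub : [set x | pi x == w1] \subset [set to x0 s].
    apply/subsetP => y; rewrite !inE => py; move: (none y).
    by rewrite /= py /= => /negbFE.
  have := subset_leq_card sub; rewrite cards1 => c.
  have := H4 _ w1O; lia.
have pd1 : pi x0 != pi (to x0 s) by rewrite px0 px0s.
have pd2 : pi x0 != pi y by rewrite px0 py.
have [g gS [gx gy]] := H5 _ _ _ _ pd1 pd2.
have gP : g \in pstab w0 w1.
  rewrite pstabP gS -{1}px0 -H3 // gx px0 eqxx /=.
  by rewrite -{1}px0s -H3 // gy py eqxx.
case/negP: yne; apply/eqP.
rewrite -gy -actMin // (comm g gP) actMin // gx //.
Qed.
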